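(* Fix an integer $n\geq 3$ and let $\mathcal E/\mathbb{Q}$ be an elliptic curve without complex multiplication. For each prime $p$ of good reduction, let $E/\mathbb{F}_p$ be the reduction of $\mathcal E$ modulo $p$ and set $$\Delta''_{E/\mathbb{F}_p;n}:=\frac{a_{E/\mathbb{F}_p;n}-\big((5-n)+(n-1)a_{E/\mathbb{F}_p}-(n-1)p\big)}{-6/\sqrt p}.$$ Define $\Theta''_{E/\mathbb{F}_p;n}\in[0,\pi]$ by $\cos\Theta''_{E/\mathbb{F}_p;n}=\Delta''_{E/\mathbb{F}_p;n}$ whenever $|\Delta''_{E/\mathbb{F}_p;n}|\leq 1$. Then for all real $0\leq\alpha<\beta\leq\pi$, $$\lim_{N\to\infty}\frac{\#\{p\leq N:\ p \text{ prime of good reduction},\ |\Delta''_{E/\mathbb{F}_p;n}|\le 1,\ \alpha\leq\Theta''_{E/\mathbb{F}_p;n}\leq\beta\}}{\#\{p\leq N:\ p\text{ prime}\}}=\frac{2}{\pi}\int_\alpha^\beta\sin^2\theta\,d\theta.$$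
   Context: For an elliptic curve $E$ over $\mathbb{F}_q$: $a_{E/\mathbb{F}_q}:=q+1-\#E(\mathbb{F}_q)$. For $m\geq 1$, $\beta_{E/\mathbb{F}_q;m}(0):=\sum_{\mathcal V}\frac{1}{\#\mathrm{Aut}(\mathcal V)}$ with $\mathcal V$ running over isomorphism classes of semi-stable vector bundles of rank $m$ and degree $0$ on $E$, and $\beta_{E/\mathbb{F}_q;0}(0):=1$. The rank $n$ $a$-invariant is $a_{E/\mathbb{F}_q;n}:=(q^n+1)-(q^n-1)\frac{\beta_{E/\mathbb{F}_q;n}(0)}{\beta_{E/\mathbb{F}_q;n-1}(0)}$. Known background (Weng–Zagier): $(q^m-1)\beta_{E/\mathbb{F}_q;m}(0)=(q^m+q^{m-1}-a_{E/\mathbb{F}_q})\beta_{E/\mathbb{F}_q;m-1}(0)-(q^{m-1}-q)\beta_{E/\mathbb{F}_q;m-2}(0)$ for $m\ge1$ with $\beta_{E/\mathbb{F}_q;-1}(0):=0$. The classical Sato–Tate law (Taylor et al.) for non-CM $\mathcal E/\mathbb{Q}$ may be used: the angles $\theta_p\in[0,\pi]$ with $\cos\theta_p=a_{E/\mathbb{F}_p}/(2\sqrt p)$ are equidistributed with respect to $\frac{2}{\pi}\sin^2\theta\,d\theta$. *)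

(* Defs.v *)
From Stdlib Require Import Reals Lra ZArith Znumtheory List Bool.
From Coquelicot Require Import Coquelicot.
Open Scope R_scope.

(* y^2 + a1 x y + a3 y = x^3 + a2 x^2 + a4 x + a6,  ai in Z. *)
Record weierstrass := Weierstrass { wa1 : Z; wa2 : Z; wa3 : Z; wa4 : Z; wa6 : Z }.

Definition wb2 (E : weierstrass) : Z := (wa1 E * wa1 E + 4 * wa2 E)%Z.
Definition wb4 (E : weierstrass) : Z := (2 * wa4 E + wa1 E * wa3 E)%Z.
Definition wb6 (E : weierstrass) : Z := (wa3 E * wa3 E + 4 * wa6 E)%Z.
Definition wb8 (E : weierstrass) : Z :=
  (wa1 E * wa1 E * wa6 E + 4 * wa2 E * wa6 E - wa1 E * wa3 E * wa4 E
   + wa2 E * wa3 E * wa3 E - wa4 E * wa4 E)%Z.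
Definition wdisc (E : weierstrass) : Z :=
  (- wb2 E * wb2 E * wb8 E - 8 * wb4 E ^ 3 - 27 * wb6 E * wb6 E
   + 9 * wb2 E * wb4 E * wb6 E)%Z.
Definition wc4 (E : weierstrass) : Z := (wb2 E * wb2 E - 24 * wb4 E)%Z.

Definition is_elliptic (E : weierstrass) : Prop := wdisc E <> 0%Z.

(* The j-invariant is j = c4^3 / Delta.  The CM j-invariants over Q are exactly the
   13 rational j-invariants of imaginary quadratic orders of class number one. *)
Definition cm_j_invariants : list Z :=
  (0 :: 1728 :: -3375 :: 8000 :: -32768 :: 54000 :: 287496 :: -884736
     :: -12288000 :: 16581375 :: -884736000 :: -147197952000
     :: -262537412640768000 :: nil)%Z.

Definition no_CM (E : weierstrass) : Prop :=
  forall j0, In j0 cm_j_invariants -> (wc4 E ^ 3 <> j0 * wdisc E)%Z.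

Definition good_prime (E : weierstrass) (p : nat) : bool :=
  (if prime_dec (Z.of_nat p) then true else false)
  && negb (Z.eqb (Z.rem (wdisc E) (Z.of_nat p)) 0).

Definition is_prime_nat (p : nat) : bool :=
  if prime_dec (Z.of_nat p) then true else false.

Definition on_curve_mod (E : weierstrass) (p : Z) (x y : Z) : bool :=
  Z.eqb (Z.modulo (y * y + wa1 E * x * y + wa3 E * y
                   - (x ^ 3 + wa2 E * x * x + wa4 E * x + wa6 E)) p) 0.

(* #E(F_p) = 1 (point at infinity) + number of affine solutions in F_p^2. *)
Definition npoints (E : weierstrass) (p : nat) : nat :=
  1 + length (filter (fun xy : nat * nat =>
                        on_curve_mod E (Z.of_nat p) (Z.of_nat (fst xy)) (Z.of_nat (snd xy)))
                     (list_prod (seq 0 p) (seq 0 p))).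

Definition ap (E : weierstrass) (p : nat) : R := INR p + 1 - INR (npoints E p).

(* beta_pair q a m = (beta_{m-1}(0), beta_m(0)), with beta_{-1} = 0, beta_0 = 1,
   (q^m - 1) beta_m = (q^m + q^{m-1} - a) beta_{m-1} - (q^{m-1} - q) beta_{m-2}. *)
Fixpoint beta_pair (q a : R) (m : nat) : R * R :=
  match m with
  | O => (0, 1)
  | S k => let (b0, b1) := beta_pair q a k in
           (b1, ((q ^ (k + 1) + q ^ k - a) * b1 - (q ^ k - q) * b0) / (q ^ (k + 1) - 1))
  end.

Definition beta (q a : R) (m : nat) : R := snd (beta_pair q a m).

Definition a_rank (q a : R) (n : nat) : R :=
  (q ^ n + 1) - (q ^ n - 1) * beta q a n / beta q a (n - 1).

Definition Delta2 (E : weierstrass) (n p : nat) : R :=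
  (a_rank (INR p) (ap E p) n
     - ((5 - INR n) + (INR n - 1) * ap E p - (INR n - 1) * INR p))
  / (- 6 / sqrt (INR p)).

Definition Theta2 (E : weierstrass) (n p : nat) : R := acos (Delta2 E n p).

Definition Rle_b (x y : R) : bool := if Rle_dec x y then true else false.

Definition prime_count (N : nat) : nat :=
  length (filter is_prime_nat (seq 0 (S N))).

Definition count_Theta2 (E : weierstrass) (n : nat) (alpha beta0 : R) (N : nat) : nat :=
  length (filter (fun p => good_prime E p
                           && Rle_b (Rabs (Delta2 E n p)) 1
                           && Rle_b alpha (Theta2 E n p)
                           && Rle_b (Theta2 E n p) beta0)
                 (seq 0 (S N))).

(* ---------- classical Sato--Tate law for E (background theorem, used as hypothesis) ---------- *)
Definition theta_p (E : weierstrass) (p : nat) : R := acos (ap E p / (2 * sqrt (INR p))).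

Definition count_theta (E : weierstrass) (alpha beta0 : R) (N : nat) : nat :=
  length (filter (fun p => good_prime E p
                           && Rle_b alpha (theta_p E p)
                           && Rle_b (theta_p E p) beta0)
                 (seq 0 (S N))).

Definition sato_tate_law (E : weierstrass) : Prop :=
  forall alpha beta0 : R, 0 <= alpha -> alpha < beta0 -> beta0 <= PI ->
    is_lim_seq (fun N => INR (count_theta E alpha beta0 N) / INR (prime_count N))
               (RInt (fun t => 2 / PI * (sin t) ^ 2) alpha beta0).

(* Main.v *)
Require Import Defs.
From Stdlib Require Import Reals Lra Lia Psatz ZArith Znumtheory List.
From Coquelicot Require Import Coquelicot.
Open Scope R_scope.

Lemma beta_0 q a : beta q a 0 = 1.
Proof. reflexivity. Qed.

Lemma fst_beta_pair q a k : fst (beta_pair q a (S k)) = beta q a k.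
Proof. simpl. unfold beta. destruct (beta_pair q a k). reflexivity. Qed.

Lemma beta_S q a k : beta q a (S k) =
  ((q ^ (k + 1) + q ^ k - a) * beta q a k - (q ^ k - q) * fst (beta_pair q a k)) / (q ^ (k + 1) - 1).
Proof. unfold beta. simpl. destruct (beta_pair q a k). reflexivity. Qed.

Lemma beta_1 q a : beta q a 1 = (q + 1 - a) / (q - 1).
Proof. rewrite beta_S. simpl. rewrite beta_0. replace ((q * 1 + 1 - a) * 1 - (1 - q) * 0) with (q+1-a) by ring. replace (q*1-1) with (q-1) by ring. reflexivity. Qed.

Lemma beta_SS q a k : beta q a (S (S k)) =
  ((q ^ (S (S k)) + q ^ (S k) - a) * beta q a (S k) - (q ^ (S k) - q) * beta q a k) / (q ^ (S (S k)) - 1).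
Proof. rewrite beta_S, fst_beta_pair. replace (S k + 1)%nat with (S (S k)) by lia. reflexivity. Qed.

Definition y q a m := ((q ^ m - 1) * beta q a m / beta q a (m - 1) - q ^ m) / q.

Lemma y_step q a k : q <> 0 -> q ^ (S k) - 1 <> 0 -> q ^ (S (S k)) - 1 <> 0 ->
  beta q a k <> 0 -> beta q a (S k) <> 0 -> q ^ k + y q a (S k) <> 0 ->
  y q a (S (S k)) = (q ^ k * (y q a (S k) + 1 + / q) - / q) / (q ^ k + y q a (S k)) - a / q.
Proof.
  intros hq h1 h2 b0 b1 hy. unfold y in *.
  replace (S (S k) - 1)%nat with (S k) by lia.
  replace (S k - 1)%nat with k in * by lia.
  rewrite beta_SS.
  set (B0 := beta q a k) in *. set (B1 := beta q a (S k)) in *.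
  simpl in *. set (Q := q ^ k) in *.
  assert (E : Q + ((q * Q - 1) * B1 / B0 - q * Q) / q = (Q * (B0 * q) + ((q * Q - 1) * B1 - q * Q * B0)) / (B0 * q)) by (field; auto).
  rewrite E in hy.
  field. repeat split; auto. intro H; apply hy; rewrite H; unfold Rdiv; ring.
Qed.

Lemma abs_div_le N D M : 0 < D -> Rabs N <= M * D -> Rabs (N / D) <= M.
Proof.
  intros hD h. unfold Rdiv. rewrite Rabs_mult, Rabs_inv, (Rabs_pos_eq D) by lra.
  apply (Rmult_le_reg_r D); auto. rewrite Rmult_assoc, Rinv_l by lra. lra.
Qed.

Lemma step_bound y Q t A n : 0 < t -> t <= 1 -> 1 <= n -> Rabs y <= n -> 1 <= Q * t ^ 4 -> 2 * n <= Q ->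
  Rabs ((Q * (y + 1 + t ^ 2) - t ^ 2) / (Q + y) - A * t - (y + 1 + t ^ 2 - A * t)) <= 2 * (n + 1) ^ 2 * t ^ 4.
Proof.
  intros ht ht1 hn hy hQ hQ2.
  pose proof (proj1 (Rabs_le_between y n) hy) as [hy1 hy2]. 
  assert (hQy : Q / 2 <= Q + y) by lra.
  replace ((Q * (y + 1 + t ^ 2) - t ^ 2) / (Q + y) - A * t - (y + 1 + t ^ 2 - A * t))
    with (- (t ^ 2 + y * (y + 1 + t ^ 2)) / (Q + y)) by (field; lra).
  apply abs_div_le; [lra|].
  assert (t2 : 0 < t ^ 2 <= 1) by (split; [apply pow_lt; lra | nra]).
  assert (Rabs (- (t ^ 2 + y * (y + 1 + t ^ 2))) <= (n+1)^2).
  { apply Rabs_le. split; nra. }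
  assert (2 * (n + 1) ^ 2 * t ^ 4 * (Q + y) >= (n+1)^2).
  { assert (0 <= (n+1)^2) by nra. assert (0 < t^4) by (apply pow_lt; lra).
    assert (2 * (n + 1) ^ 2 * t ^ 4 * (Q + y) >= 2 * (n + 1) ^ 2 * t ^ 4 * (Q/2)).
    { apply Rle_ge, Rmult_le_compat_l; [|lra]. apply Rmult_le_pos; lra. }
    assert ((n + 1) ^ 2 * (Q * t ^ 4) >= (n+1)^2 * 1). { apply Rle_ge, Rmult_le_compat_l; lra. }
    lra. }
  lra.
Qed.

Lemma beta_nz q a m : q <> 0 -> beta q a m <> 0 -> q ^ (S m) - 1 <> 0 ->
  y q a (S m) + q ^ m <> 0 -> beta q a (S m) <> 0.
Proof.
  intros hq hb h1 hy hb'. apply hy. unfold y. replace (S m - 1)%nat with m by lia.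
  rewrite hb'. simpl. field. auto.
Qed.

Lemma y2_val q a : q <> 0 -> q - 1 <> 0 -> q * q - 1 <> 0 -> q + 1 - a <> 0 ->
  beta q a 1 <> 0 /\ y q a 2 = 1 - a / q.
Proof.
  intros hq h1 h2 h3.
  assert (b1 : beta q a 1 <> 0).
  { rewrite beta_1. unfold Rdiv. apply Rmult_integral_contrapositive. split; auto. apply Rinv_neq_0_compat; auto. }
  split; auto.
  unfold y. simpl (2-1)%nat. rewrite beta_SS. rewrite beta_0. rewrite beta_1 in *.
  simpl. field. repeat split; auto.


Qed.

Lemma a_rank_y q a n : q <> 0 -> beta q a (n - 1) <> 0 -> a_rank q a n = 1 - q * y q a n.
Proof. intros hq hb. unfold a_rank, y. field. auto. Qed.

Definition Tm (m : nat) (t A : R) : R :=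
  (INR m - 1) + (INR m - 4) * t ^ 2 - (INR m - 1) * A * t + 3 * A * t ^ 3.

Lemma pow_gt1 q j : 1 < q -> (1 <= j)%nat -> 1 < q ^ j.
Proof.
  intros hq hj. induction j as [|j IH]; [lia|].
  destruct j. simpl; lra. simpl. simpl in IH. assert (1 < q * q ^ j) by (apply IH; lia). nra.
Qed.

Lemma powk_ge_q2 q k : 1 < q -> (2 <= k)%nat -> q ^ 2 <= q ^ k.
Proof. intros hq hk. apply Rle_pow; lra || lia. Qed.

Lemma base3 q a t A : 0 < t -> t <= 1/100 -> q = / t ^ 2 -> a = A / t -> Rabs A <= 2 ->
  beta q a 2 <> 0 /\ Rabs (y q a 3 - Tm 3 t A) <= 10 * t ^ 4.
Proof.
  intros ht ht1 hq ha hA. pose proof (proj1 (Rabs_le_between A 2) hA) as [hA1 hA2].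
  assert (t2 : 0 < t ^ 2) by (apply pow_lt; lra).
  assert (iq : / q = t ^ 2) by (rewrite hq; field; lra).
  assert (aq : a / q = A * t) by (rewrite hq, ha; field; lra).
  assert (qt : q * t ^ 2 = 1) by (rewrite hq; field; lra).
  assert (q1 : 1 < q). { assert (t ^ 2 <= 1/10000) by nra. nra. }
  assert (hq0 : q <> 0) by lra.
  assert (At : Rabs (A * t) <= 1/50). { rewrite Rabs_mult, (Rabs_pos_eq t) by lra. nra. }
  pose proof (proj1 (Rabs_le_between _ _) At) as [At1 At2].
  assert (aqq : a = (A * t) * q) by (rewrite <- aq; field; lra).
  assert (qa : q + 1 - a > 0) by nra.
  assert (qq : q * q - 1 > 0) by nra.
  destruct (y2_val q a) as [b1 hy2]; auto; try lra.
  rewrite aq in hy2.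
  assert (b2 : beta q a 2 <> 0).
  { apply (beta_nz q a 1); auto. simpl; nra. rewrite hy2. simpl. nra. }
  split; auto.
  assert (H3 := y_step q a 1).
  rewrite H3; clear H3; [|auto|simpl; nra|simpl; nra|auto|auto|rewrite hy2; simpl; nra].
  rewrite hy2, iq, aq. replace (q ^ 1) with q by ring. unfold Tm. simpl INR.
  replace ((q * (1 - A * t + 1 + t ^ 2) - t ^ 2) / (q + (1 - A * t)) - A * t -
   ((1 + 1 + 1 - 1) + (1 + 1 + 1 - 4) * t ^ 2 - (1 + 1 + 1 - 1) * A * t + 3 * A * t ^ 3))
   with (t ^ 4 * (- A ^ 2 - 4 * A * t + 3 * A ^ 2 * t ^ 2) / (1 + t ^ 2 - A * t ^ 3)).
  2:{ rewrite hq. field. split; [lra|]. assert ((1 - A*t)*t^2 > 0) by (apply Rmult_gt_0_compat; lra). lra. }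
  apply abs_div_le. nra.
  rewrite Rabs_mult, Rabs_pos_eq by (apply pow_le; lra).
  assert (Rabs (- A ^ 2 - 4 * A * t + 3 * A ^ 2 * t ^ 2) <= 5). { apply Rabs_le; split; nra. }
  assert (0 < t ^ 4) by (apply pow_lt; lra).
  assert (1/2 <= 1 + t ^ 2 - A * t ^ 3) by nra.
  nra.
Qed.

Lemma small_facts nn mm t A : 3 <= mm <= nn -> 0 < t -> t * (100 * (nn + 2) ^ 2) <= 1 -> Rabs A <= 2 ->
  t <= 1/100 /\ Rabs ((mm - 1) + (mm - 4) * t ^ 2 - (mm - 1) * A * t + 3 * A * t ^ 3 - (mm - 1)) <= 1/4 /\
  (10 + (mm - 3) * (2 * (nn + 1) ^ 2)) * t ^ 4 <= 1/4.
Proof.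
  intros [h1 h2] ht hw hA. pose proof (proj1 (Rabs_le_between A 2) hA) as [hA1 hA2].
  set (w := (nn + 2) ^ 2 * t).
  assert (hw' : w <= 1/100) by (unfold w; lra).
  assert (hnt : nn * t <= w). { unfold w. assert (nn <= (nn+2)^2) by nra. nra. }
  assert (htw : t <= w). { unfold w. assert (1 <= (nn+2)^2) by nra. nra. }
  assert (t2 : t ^ 2 <= t) by (simpl; nra).
  assert (t3 : t ^ 3 <= t) by (simpl; nra).
  assert (0 < t ^ 2) by (apply pow_lt; lra).
  assert (0 < t ^ 3) by (apply pow_lt; lra).
  split; [lra|split].
  - apply Rabs_le.
    assert (Rabs ((mm - 1) * A * t) <= 2 * w).
    { rewrite !Rabs_mult, (Rabs_pos_eq (mm-1)), (Rabs_pos_eq t) by lra.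
      assert ((mm-1)*t <= w) by nra. assert (0 <= Rabs A) by apply Rabs_pos.
      assert ((mm-1)*t*Rabs A <= w * 2) by nra. nra. }
    pose proof (proj1 (Rabs_le_between _ _) H1) as [u1 u2].
    assert (0 <= (mm - 4) * t ^ 2 + t^2 <= nn * t) by nra.
    assert (-3 * 2 * t <= 3 * A * t ^ 3 <= 3 * 2 * t) by nra.
    split; nra.
  - assert (e1 : (mm - 3) * (2 * (nn + 1) ^ 2) <= 2 * nn * (nn+2)^2) by nra.
    assert (e2 : 0 < t ^ 4) by (apply pow_lt; lra).
    assert (e3 : (mm - 3) * (2 * (nn + 1) ^ 2) * t ^ 4 <= 2 * nn * (nn+2)^2 * t ^ 4) by nra.
    assert (e4 : 2 * nn * (nn+2)^2 * t ^ 4 = 2 * (nn * t) * w * t ^ 2) by (unfold w; ring).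
    assert (e5 : (nn * t) * w <= w * w) by nra.
    assert (e6 : 2 * (nn * t) * w * t ^ 2 <= 2 * (w * w) * t ^ 2) by nra.
    assert (e7 : t ^ 4 <= t) by (simpl; nra).
    assert (w * w <= 1) by nra.
    nra.
Qed.

Lemma Tm_S m t A : Tm (S m) t A = Tm m t A + 1 + t ^ 2 - A * t.
Proof. unfold Tm. rewrite S_INR. ring. Qed.

Lemma main_ind n q a t A : (3 <= n)%nat -> 0 < t -> t * (100 * (INR n + 2) ^ 2) <= 1 ->
  q = / t ^ 2 -> a = A / t -> Rabs A <= 2 ->
  forall m, (3 <= m)%nat -> (m <= n)%nat ->
  beta q a (m - 1) <> 0 /\
  Rabs (y q a m - Tm m t A) <= (10 + (INR m - 3) * (2 * (INR n + 1) ^ 2)) * t ^ 4.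
Proof.
  intros hn ht hw hq ha hA.
  assert (hn3 : 3 <= INR n) by (replace 3 with (INR 3) by (simpl; ring); apply le_INR; lia).
  assert (ht1 : t <= 1/100).
  { destruct (small_facts (INR n) (INR n) t A) as [? _]; auto; lra. }
  assert (t2 : 0 < t ^ 2) by (apply pow_lt; lra).
  assert (iq : / q = t ^ 2) by (rewrite hq; field; lra).
  assert (aq : a / q = A * t) by (rewrite hq, ha; field; lra).
  assert (q1 : 1 < q). { assert (t ^ 2 <= 1/10000) by nra. rewrite hq. 
    apply (Rmult_lt_reg_r (t^2)); auto. rewrite Rinv_l by lra. nra. }
  induction m as [|m IH]; intros h3 hmn; [lia|].
  destruct (Nat.eq_dec m 2) as [->|hm].
  { destruct (base3 q a t A) as [b2 hb]; auto. simpl INR.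
    replace (1+1+1-3) with 0 by ring. split; [exact b2|]. lra. }
  destruct IH as [bm hym]; [lia|lia|].
  destruct m as [|[|k]]; [lia|lia|].
  replace (S (S k) - 1)%nat with (S k) in bm by lia.
  replace (S (S (S k)) - 1)%nat with (S (S k)) by lia.
  set (nn := INR n) in *. set (mm := INR (S (S k))) in *.
  assert (hmm : 3 <= mm <= nn - 1).
  { unfold mm, nn. split. replace 3 with (INR 3) by (simpl; ring); apply le_INR; lia.
    assert (INR (S (S (S k))) <= INR n) by (apply le_INR; lia). rewrite S_INR in H. lra. }
  destruct (small_facts nn mm t A) as [_ [hT hE]]; auto; [lra|].
  assert (hy : Rabs (y q a (S (S k))) <= nn).
  { unfold Tm in hym. fold mm in hym.
    pose proof (proj1 (Rabs_le_between _ _) hym) as [u1 u2].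
    pose proof (proj1 (Rabs_le_between _ _) hT) as [v1 v2].
    apply Rabs_le. split; lra. }
  pose proof (proj1 (Rabs_le_between _ _) hy) as [y1 y2].
  set (Q := q ^ (S k)).
  assert (hQ : q ^ 2 <= Q) by (apply powk_ge_q2; auto; lia).
  assert (hq2 : q ^ 2 * t ^ 4 = 1) by (rewrite hq; field; lra).
  assert (hQt : 1 <= Q * t ^ 4). { assert (0 < t^4) by (apply pow_lt; lra). nra. }
  assert (hQn : 2 * nn <= Q).
  { assert (nn <= (nn+2)^2) by nra.
    assert (hnt : nn * t <= 1/100) by nra.
    assert (t3 : 0 < t ^ 3 <= 1). { split. apply pow_lt; lra. simpl. assert (t*t <= 1) by nra. nra. }
    assert (e : 2 * nn * t ^ 4 = 2 * (nn * t) * t ^ 3) by ring.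
    assert (0 < t^4) by (apply pow_lt; lra).
    apply (Rmult_le_reg_r (t ^ 4)); auto. nra. }
  assert (bSm : beta q a (S (S k)) <> 0).
  { apply (beta_nz q a (S k)); auto; [lra| |].
    - assert (1 < q ^ (S (S k))) by (apply pow_gt1; auto; lia). lra.
    - fold Q. lra. }
  split; auto.
  assert (Hs := y_step q a (S k)).
  rewrite Hs; clear Hs; try lra; auto.
  2:{ assert (1 < q ^ (S (S k))) by (apply pow_gt1; auto; lia). lra. }
  2:{ assert (1 < q ^ (S (S (S k)))) by (apply pow_gt1; auto; lia). lra. }
  2:{ fold Q. lra. }
  fold Q. rewrite iq, aq.
  pose proof (step_bound (y q a (S (S k))) Q t A nn ht ltac:(lra) ltac:(lra) hy hQt hQn) as hd.
  rewrite Tm_S. fold mm. rewrite S_INR. 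
  set (Y := y q a (S (S k))) in *.
  set (Y' := (Q * (Y + 1 + t ^ 2) - t ^ 2) / (Q + Y) - A * t) in *.
  replace (Y' - (Tm (S (S k)) t A + 1 + t ^ 2 - A * t)) with
    ((Y' - (Y + 1 + t ^ 2 - A * t)) + (Y - Tm (S (S k)) t A)) by ring.
  eapply Rle_trans. apply Rabs_triang.
  change (INR (S (S k))) with mm. fold mm in hym.
  replace ((10 + (mm + 1 - 3) * (2 * (nn + 1) ^ 2)) * t ^ 4) with
    (2 * (nn + 1) ^ 2 * t ^ 4 + (10 + (mm - 3) * (2 * (nn + 1) ^ 2)) * t ^ 4) by ring.
  apply Rplus_le_compat; auto.
Qed.

Lemma delta_gen n q a : (3 <= n)%nat -> 0 < q ->
  / sqrt q * (100 * (INR n + 2) ^ 2) <= 1 -> Rabs (a / (2 * sqrt q)) <= 1 ->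
  Rabs ((a_rank q a n - ((5 - INR n) + (INR n - 1) * a - (INR n - 1) * q)) / (- 6 / sqrt q)
        - a / (2 * sqrt q))
  <= (10 + (INR n - 3) * (2 * (INR n + 1) ^ 2)) / 6 * / sqrt q.
Proof.
  intros hn hq hw hc.
  assert (hs : 0 < sqrt q) by (apply sqrt_lt_R0; auto).
  assert (hss : sqrt q * sqrt q = q) by (apply sqrt_sqrt; lra).
  set (s := sqrt q) in *. set (t := / s).
  assert (ht : 0 < t) by (unfold t; apply Rinv_0_lt_compat; auto).
  set (A := a * t).
  assert (hqt : q = / t ^ 2) by (unfold t; rewrite <- hss; field; lra).
  assert (hat : a = A / t) by (unfold A; field; lra).
  assert (hA : Rabs A <= 2).
  { replace A with (2 * (a / (2 * s))) by (unfold A, t; field; lra).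
    rewrite Rabs_mult, Rabs_pos_eq by lra. lra. }
  destruct (main_ind n q a t A hn ht hw hqt hat hA n hn (le_n n)) as [bn hy].
  rewrite (a_rank_y q a n) by (auto; lra).
  set (Y := y q a n) in *.
  replace ((1 - q * Y - ((5 - INR n) + (INR n - 1) * a - (INR n - 1) * q)) / (- 6 / s) - a / (2 * s))
    with ((Y - Tm n t A) / (6 * t ^ 3)).
  2:{ unfold Tm. rewrite hqt, hat. unfold t. field. lra. }
  apply abs_div_le. assert (0 < t^3) by (apply pow_lt; lra). lra.
  set (K := 10 + (INR n - 3) * (2 * (INR n + 1) ^ 2)) in *.
  replace (K / 6 * t * (6 * t ^ 3)) with (K * t ^ 4) by (field; lra).
  exact hy.
Qed.

Definition cnt (f : nat -> bool) (N : nat) : nat := length (filter f (seq 0 (S N))).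

Lemma cnt_S f N : cnt f (S N) = (cnt f N + (if f (S N) then 1 else 0))%nat.
Proof. unfold cnt. rewrite (seq_S (S N)), filter_app, length_app. simpl. destruct (f (S N)); reflexivity. Qed.

Lemma cnt_sub f g1 g2 N : (forall p, f p = true -> g1 p = true \/ g2 p = true) ->
  (cnt f N <= cnt g1 N + cnt g2 N)%nat.
Proof.
  intros H. induction N.
  - unfold cnt. simpl. destruct (f 0%nat) eqn:E; simpl; [|lia].
    destruct (H 0%nat E) as [e|e]; rewrite e; simpl; [lia|destruct (g1 0%nat); simpl; lia].
  - rewrite !cnt_S. destruct (f (S N)) eqn:E; [|lia].
    destruct (H _ E) as [e|e]; rewrite e; destruct (g1 (S N)), (g2 (S N)); lia.
Qed.

Lemma cnt_mono f N M : (N <= M)%nat -> (cnt f N <= cnt f M)%nat.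
Proof. induction 1; auto. rewrite cnt_S. lia. Qed.

Lemma cnt_lt P0 N : (cnt (fun p => Nat.ltb p P0) N <= P0)%nat.
Proof.
  induction N.
  - unfold cnt. simpl. destruct (Nat.ltb 0%nat P0) eqn:E; simpl; [apply Nat.ltb_lt in E|]; lia.
  - rewrite cnt_S. destruct (Nat.ltb (S N) P0) eqn:E; [|lia].
    apply Nat.ltb_lt in E.
    assert (cnt (fun p => Nat.ltb p P0) N <= N + 1)%nat.
    { clear. induction N. unfold cnt; simpl; destruct (Nat.ltb 0%nat P0); simpl; lia.
      rewrite cnt_S. destruct (Nat.ltb (S N) P0); lia. }
    lia.
Qed.

Lemma prime_div_exists : forall n : Z, (1 < n)%Z -> exists p, prime p /\ (p | n)%Z.
Proof.
  intros n hn. assert (hn0 : (0 <= n)%Z) by lia. revert hn.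
  apply (Z_lt_induction (fun n => (1 < n)%Z -> exists p, prime p /\ (p | n)%Z)); [|exact hn0].
  intros x IH hx. destruct (prime_dec x) as [hp|hp].
  - exists x. split; auto. apply Z.divide_refl.
  - destruct (not_prime_divide x hx hp) as [d [hd1 hd2]].
    destruct (IH d ltac:(lia) ltac:(lia)) as [p [pp pd]].
    exists p. split; auto. eapply Z.divide_trans; eauto.
Qed.

Lemma div_fact : forall m k, (1 <= k <= m)%nat -> (Z.of_nat k | Z.of_nat (fact m))%Z.
Proof.
  induction m; intros k hk; [lia|].
  destruct (Nat.eq_dec k (S m)) as [->|hne].
  - simpl fact. rewrite Nat2Z.inj_add, Nat2Z.inj_mul. 
    exists (Z.of_nat (fact m)). lia.
  - simpl fact. rewrite Nat2Z.inj_add, Nat2Z.inj_mul.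
    destruct (IHm k ltac:(lia)) as [c hc]. exists (c * (1 + Z.of_nat m))%Z. lia.
Qed.

Lemma euclid (m : nat) : exists p, (m < p)%nat /\ is_prime_nat p = true.
Proof.
  assert (h1 : (1 < Z.of_nat (fact m) + 1)%Z).
  { pose proof (lt_O_fact m). lia. }
  destruct (prime_div_exists _ h1) as [p [pp pd]].
  pose proof (prime_ge_2 p pp) as p2.
  exists (Z.to_nat p). split.
  - destruct (le_lt_dec (Z.to_nat p) m) as [hle|]; auto.
    exfalso.
    assert (hd : (p | Z.of_nat (fact m))%Z).
    { replace p with (Z.of_nat (Z.to_nat p)) by lia. apply div_fact. lia. }
    assert (hd1 : (p | 1)%Z).
    { replace 1%Z with (Z.of_nat (fact m) + 1 - Z.of_nat (fact m))%Z by ring.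
      apply Z.divide_sub_r; auto. }
    apply Z.divide_1_r in hd1. lia.
  - unfold is_prime_nat. rewrite Z2Nat.id by lia.
    destruct (prime_dec p); auto.
Qed.

Lemma prime_count_unbounded : forall k, exists N, (k <= prime_count N)%nat.
Proof.
  induction k. exists 0%nat; lia.
  destruct IHk as [N hN].
  destruct (euclid N) as [p [hp pr]].
  exists p.
  assert (prime_count p = cnt is_prime_nat p) by reflexivity.
  assert (prime_count N = cnt is_prime_nat N) by reflexivity.
  destruct p. lia.
  rewrite H, cnt_S, pr.
  pose proof (cnt_mono is_prime_nat N p ltac:(lia)). lia.
Qed.

Lemma PI_gt3 : 3 < PI.
Proof. pose proof PI2_3_2. lra. Qed.

Lemma acos_ge1 x : 1 <= x -> acos x = 0.
Proof. intros h. unfold acos. destruct (Rle_dec x (-1)); [lra|]. destruct (Rle_dec 1 x); [auto|lra]. Qed.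

Lemma acos_lem1 x : x <= -1 -> acos x = PI.
Proof. intros h. unfold acos. destruct (Rle_dec x (-1)); [auto|lra]. Qed.

Lemma cos_le_dec x y : 0 <= x -> x <= y -> y <= PI -> cos y <= cos x.
Proof.
  intros h1 h2 h3. destruct (Req_dec x y) as [->|hne]; [lra|].
  left. apply cos_decreasing_1; lra.
Qed.

Lemma acos_ge x a : -1 <= x <= 1 -> 0 <= a <= PI -> x <= cos a -> a <= acos x.
Proof.
  intros hx ha h. pose proof (acos_bound x). destruct (Rle_dec a (acos x)) as [|hn]; auto.
  exfalso. assert (cos a < cos (acos x)) by (apply cos_decreasing_1; lra).
  rewrite cos_acos in H0 by lra. lra.
Qed.

Lemma acos_le x b : -1 <= x <= 1 -> 0 <= b <= PI -> cos b <= x -> acos x <= b.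
Proof.
  intros hx hb h. pose proof (acos_bound x). destruct (Rle_dec (acos x) b) as [|hn]; auto.
  exfalso. assert (cos (acos x) < cos b) by (apply cos_decreasing_1; lra).
  rewrite cos_acos in H0 by lra. lra.
Qed.

Section Imp.
Variables (alpha beta eta h : R).
Hypotheses (ha : 0 <= alpha) (hab : alpha + eta < beta - eta) (hb : beta <= PI) (he : 0 < eta)
  (h1 : h <= cos alpha - cos (alpha + eta)) (h2 : h <= cos (beta - eta) - cos beta)
  (h3 : 0 <= alpha - eta -> h <= cos (alpha - eta) - cos alpha)
  (h4 : beta + eta <= PI -> h <= cos beta - cos (beta + eta)).

Lemma imp_lower c D : (Rabs c <= 1 -> Rabs (D - c) <= h) ->
  alpha + eta <= acos c <= beta - eta -> Rabs D <= 1 /\ alpha <= acos D <= beta.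
Proof.
  intros H [t1 t2].
  assert (c1 : c < 1). { destruct (Rle_dec 1 c); [|lra]. rewrite acos_ge1 in t1; lra. }
  assert (c2 : -1 < c). { destruct (Rle_dec c (-1)); [|lra]. rewrite acos_lem1 in t2; lra. }
  pose proof (proj1 (Rabs_le_between _ _) (H ltac:(apply Rabs_le; lra))) as [d1 d2].
  assert (ec : cos (acos c) = c) by (apply cos_acos; lra).
  assert (u1 : c <= cos (alpha + eta)) by (rewrite <- ec; apply cos_le_dec; lra).
  assert (u2 : cos (beta - eta) <= c) by (rewrite <- ec; apply cos_le_dec; pose proof (acos_bound c); lra).
  pose proof (COS_bound alpha). pose proof (COS_bound beta).
  assert (Dr : -1 <= D <= 1) by lra.
  split; [apply Rabs_le; lra|].
  split; [apply acos_ge|apply acos_le]; lra.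
Qed.

Lemma imp_upper c D : (Rabs c <= 1 -> Rabs (D - c) <= h) ->
  Rabs D <= 1 -> alpha <= acos D <= beta ->
  (Rmax 0 (alpha - eta) <= acos c <= Rmin PI (beta + eta)) \/ (0 <= acos c <= eta) \/
  (PI - eta <= acos c <= PI).
Proof.
  intros H hD [t1 t2].
  destruct (Rle_dec 1 c) as [c1|c1].
  { right; left. rewrite acos_ge1 by lra. lra. }
  destruct (Rle_dec c (-1)) as [c2|c2].
  { right; right. rewrite acos_lem1 by lra. lra. }
  left.
  pose proof (proj1 (Rabs_le_between _ _) (H ltac:(apply Rabs_le; lra))) as [d1 d2].
  pose proof (proj1 (Rabs_le_between _ _) hD) as [e1 e2].
  assert (ec : cos (acos D) = D) by (apply cos_acos; lra).
  assert (u1 : D <= cos alpha) by (rewrite <- ec; apply cos_le_dec; pose proof (acos_bound D); lra).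
  assert (u2 : cos beta <= D) by (rewrite <- ec; apply cos_le_dec; pose proof (acos_bound D); lra).
  pose proof (acos_bound c).
  split.
  - apply Rmax_lub; [lra|].
    destruct (Rle_dec 0 (alpha - eta)) as [hp|hp]; [|lra].
    specialize (h3 hp). apply acos_ge; lra.
  - apply Rmin_glb; [lra|].
    destruct (Rle_dec (beta + eta) PI) as [hp|hp]; [|lra].
    specialize (h4 hp). apply acos_le; lra.
Qed.
End Imp.

Definition stf (t : R) : R := 2 / PI * (sin t) ^ 2.

Lemma PI_gt3' : 3 < PI.
Proof. pose proof PI2_3_2. lra. Qed.

Lemma stf_ex a b : ex_RInt stf a b.
Proof.
  apply (@ex_RInt_continuous R_CompleteNormedModule). intros z _. apply continuity_pt_filterlim. unfold stf. reg.
Qed.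

Lemma stf_bound t : Rabs (stf t) <= 1.
Proof.
  unfold stf. pose proof PI_gt3'. pose proof (SIN_bound t).
  assert (0 <= sin t ^ 2 <= 1) by (simpl; nra).
  assert (0 < 2 / PI <= 1). { split. apply Rdiv_lt_0_compat; lra.
    apply (Rmult_le_reg_r PI); [lra|]. unfold Rdiv. rewrite Rmult_assoc, Rinv_l by lra. lra. }
  rewrite Rabs_pos_eq by nra. nra.
Qed.

Lemma F_piece a b : a <= b -> Rabs (RInt stf a b) <= b - a.
Proof.
  intros h. eapply Rle_trans. apply abs_RInt_le_const; auto. apply stf_ex.
  intros; apply stf_bound. lra.
Qed.

Lemma F_compare a' a b b' : a' <= a -> a <= b -> b <= b' ->
  Rabs (RInt stf a' b' - RInt stf a b) <= (a - a') + (b' - b).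
Proof.
  intros h1 h2 h3.
  assert (e1 := RInt_Chasles stf a' a b' (stf_ex _ _) (stf_ex _ _)).
  assert (e2 := RInt_Chasles stf a b b' (stf_ex _ _) (stf_ex _ _)).
  change plus with Rplus in e1, e2. simpl in e1, e2.
  rewrite <- e1, <- e2.
  pose proof (F_piece a' a h1). pose proof (F_piece b b' h3).
  replace (RInt stf a' a + (RInt stf a b + RInt stf b b') - RInt stf a b) with
    (RInt stf a' a + RInt stf b b') by ring.
  eapply Rle_trans. apply Rabs_triang. lra.
Qed.
Local Open Scope bool_scope.
Local Open Scope R_scope.

Lemma Rle_b_true x y : Rle_b x y = true <-> x <= y.
Proof. unfold Rle_b. destruct (Rle_dec x y); split; auto; intros; try discriminate; contradiction. Qed.

Lemma lim_spec u l : is_lim_seq u (Finite l) -> forall eps : posreal, eventually (fun n => Rabs (u n - l) < eps).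
Proof. intros H. apply is_lim_seq_spec in H. exact H. Qed.

Theorem theorem14 (n : nat) (E : weierstrass)
  (hn : (3 <= n)%nat)
  (hE : is_elliptic E)
  (hCM : no_CM E)
  (hST : sato_tate_law E)
  (alpha beta0 : R)
  (ha : 0 <= alpha) (hab : alpha < beta0) (hb : beta0 <= PI) :
  is_lim_seq (fun N => INR (count_Theta2 E n alpha beta0 N) / INR (prime_count N))
             (RInt (fun t => 2 / PI * (sin t) ^ 2) alpha beta0).
Proof.
  change (fun t => 2 / PI * (sin t) ^ 2) with stf.
  assert (hST' : forall a b, 0 <= a -> a < b -> b <= PI ->
    forall eps : posreal, eventually (fun N => Rabs (INR (count_theta E a b N) / INR (prime_count N) - RInt stf a b) < eps)).
  { intros a b h1 h2 h3. apply lim_spec. apply hST; auto. }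
  clear hST.
  apply is_lim_seq_spec. intros eps.
  pose proof (cond_pos eps) as heps.
  set (F := RInt stf alpha beta0).
  pose proof PI_gt3 as hPI.
  set (eta := Rmin ((beta0 - alpha) / 4) (eps / 8)).
  assert (he : 0 < eta) by (apply Rmin_glb_lt; lra).
  assert (he1 : eta <= (beta0 - alpha) / 4) by apply Rmin_l.
  assert (he2 : eta <= eps / 8) by apply Rmin_r.
  assert (hc1 : 0 < cos alpha - cos (alpha + eta)).
  { assert (cos (alpha + eta) < cos alpha) by (apply cos_decreasing_1; lra). lra. }
  assert (hc2 : 0 < cos (beta0 - eta) - cos beta0).
  { assert (cos beta0 < cos (beta0 - eta)) by (apply cos_decreasing_1; lra). lra. }
  set (h3 := if Rle_dec 0 (alpha - eta) then cos (alpha - eta) - cos alpha else 1).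
  set (h4 := if Rle_dec (beta0 + eta) PI then cos beta0 - cos (beta0 + eta) else 1).
  assert (hc3 : 0 < h3).
  { unfold h3. destruct (Rle_dec 0 (alpha - eta)); [|lra].
    assert (cos alpha < cos (alpha - eta)) by (apply cos_decreasing_1; lra). lra. }
  assert (hc4 : 0 < h4).
  { unfold h4. destruct (Rle_dec (beta0 + eta) PI); [|lra].
    assert (cos (beta0 + eta) < cos beta0) by (apply cos_decreasing_1; lra). lra. }
  set (h := Rmin (Rmin (cos alpha - cos (alpha + eta)) (cos (beta0 - eta) - cos beta0)) (Rmin h3 h4)).
  assert (hh : 0 < h) by (unfold h; repeat apply Rmin_glb_lt; lra).
  assert (hh1 : h <= cos alpha - cos (alpha + eta)) by (unfold h; eapply Rle_trans; [apply Rmin_l|apply Rmin_l]).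
  assert (hh2 : h <= cos (beta0 - eta) - cos beta0) by (unfold h; eapply Rle_trans; [apply Rmin_l|apply Rmin_r]).
  assert (hh3 : 0 <= alpha - eta -> h <= cos (alpha - eta) - cos alpha).
  { intros H. assert (h <= h3) by (unfold h; eapply Rle_trans; [apply Rmin_r|apply Rmin_l]).
    unfold h3 in H0. destruct (Rle_dec 0 (alpha - eta)); [lra|contradiction]. }
  assert (hh4 : beta0 + eta <= PI -> h <= cos beta0 - cos (beta0 + eta)).
  { intros H. assert (h <= h4) by (unfold h; eapply Rle_trans; [apply Rmin_r|apply Rmin_r]).
    unfold h4 in H0. destruct (Rle_dec (beta0 + eta) PI); [lra|contradiction]. }
  set (nn := INR n).
  assert (hnn : 3 <= nn) by (unfold nn; replace 3 with (INR 3) by (simpl; ring); apply le_INR; lia).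
  set (K := (10 + (nn - 3) * (2 * (nn + 1) ^ 2)) / 6).
  assert (hK : 0 < K) by (unfold K; nra).
  set (M := Rmax (100 * (nn + 2) ^ 2) (K / h)).
  assert (hM : 0 < M) by (unfold M; eapply Rlt_le_trans; [|apply Rmax_l]; nra).
  destruct (nfloor_ex (M ^ 2) ltac:(nra)) as [n0 [_ hn0]].
  set (P0 := S n0).
  assert (hP0 : forall p, (P0 <= p)%nat -> Rabs (ap E p / (2 * sqrt (INR p))) <= 1 ->
                 Rabs (Delta2 E n p - ap E p / (2 * sqrt (INR p))) <= h).
  { intros p hp hc.
    assert (hpM : M ^ 2 < INR p).
    { assert (INR P0 <= INR p) by (apply le_INR; auto). unfold P0 in H. rewrite S_INR in H. lra. }
    assert (hsM : M < sqrt (INR p)).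
    { rewrite <- (sqrt_pow2 M) by lra. apply sqrt_lt_1_alt. split; [nra|auto]. }
    assert (hs : 0 < sqrt (INR p)) by lra.
    assert (hw : / sqrt (INR p) * (100 * (INR n + 2) ^ 2) <= 1).
    { assert (100 * (nn + 2) ^ 2 <= M) by apply Rmax_l.
      apply (Rmult_le_reg_l (sqrt (INR p))); auto. rewrite <- Rmult_assoc, Rinv_r by lra.
      fold nn. lra. }
    pose proof (delta_gen n (INR p) (ap E p) hn ltac:(nra) hw hc) as HD.
    unfold Delta2. eapply Rle_trans; [exact HD|].
    fold nn. fold K.
    assert (K / h <= M) by apply Rmax_r.
    assert (K <= h * sqrt (INR p)).
    { replace K with ((K / h) * h) by (field; lra). set (X := K / h) in *. nra. }
    apply (Rmult_le_reg_r (sqrt (INR p))); auto. rewrite Rmult_assoc, Rinv_l by lra. lra. }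

  set (alpha' := Rmax 0 (alpha - eta)). set (beta' := Rmin PI (beta0 + eta)).
  set (fT := fun p => good_prime E p && Rle_b (Rabs (Delta2 E n p)) 1 && Rle_b alpha (Theta2 E n p) && Rle_b (Theta2 E n p) beta0).
  set (g := fun a b p => good_prime E p && Rle_b a (theta_p E p) && Rle_b (theta_p E p) b).
  set (lt0 := fun p => Nat.ltb p P0).
  assert (eT : forall N, count_Theta2 E n alpha beta0 N = cnt fT N) by reflexivity.
  assert (eg : forall a b N, count_theta E a b N = cnt (g a b) N) by reflexivity.
  assert (gI : forall a b p, good_prime E p = true -> a <= theta_p E p <= b -> g a b p = true).
  { intros a b p H1 [H2 H3]. unfold g. rewrite H1. apply Rle_b_true in H2. apply Rle_b_true in H3.
    rewrite H2, H3. reflexivity. }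
  assert (imU : forall p, fT p = true -> lt0 p = true \/ (g alpha' beta' p || (g 0 eta p || g (PI - eta) PI p)) = true).
  { intros p Hp. unfold fT in Hp. apply andb_prop in Hp as [Hp Hb]. apply andb_prop in Hp as [Hp Ha].
    apply andb_prop in Hp as [Hg Hd].
    apply Rle_b_true in Hb. apply Rle_b_true in Ha. apply Rle_b_true in Hd.
    unfold lt0. destruct (Nat.ltb p P0) eqn:El; [left; reflexivity|right].
    apply Nat.ltb_ge in El.
    assert (HH := imp_upper alpha beta0 eta h ha ltac:(lra) hb he hh3 hh4
       (ap E p / (2 * sqrt (INR p))) (Delta2 E n p) (hP0 p El) Hd (conj Ha Hb)).
    apply Bool.orb_true_iff. destruct HH as [HH|[HH|HH]].
    - left. apply gI; auto.
    - right. apply Bool.orb_true_iff. left. apply gI; auto.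
    - right. apply Bool.orb_true_iff. right. apply gI; auto. }
  assert (imL : forall p, g (alpha + eta) (beta0 - eta) p = true -> lt0 p = true \/ fT p = true).
  { intros p Hp. unfold g in Hp. apply andb_prop in Hp as [Hp Hb]. apply andb_prop in Hp as [Hg Ha].
    apply Rle_b_true in Hb. apply Rle_b_true in Ha.
    unfold lt0. destruct (Nat.ltb p P0) eqn:El; [left; reflexivity|right].
    apply Nat.ltb_ge in El.
    destruct (imp_lower alpha beta0 eta h ha ltac:(lra) hb he hh1 hh2
       (ap E p / (2 * sqrt (INR p))) (Delta2 E n p) (hP0 p El) (conj Ha Hb)) as [HD [HA HB]].
    unfold fT. rewrite Hg. apply Rle_b_true in HD. apply Rle_b_true in HA. apply Rle_b_true in HB.
    unfold Theta2. rewrite HD, HA, HB. reflexivity. }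
  assert (cU : forall N, (cnt fT N <= P0 + (cnt (g alpha' beta') N + (cnt (g 0%R eta) N + cnt (g (PI - eta)%R PI) N)))%nat).
  { intros N. eapply Nat.le_trans. apply (cnt_sub fT lt0 _ N imU).
    pose proof (cnt_lt P0 N). fold lt0 in H.
    assert (A1 := cnt_sub (fun p => g alpha' beta' p || (g 0 eta p || g (PI - eta) PI p)) (g alpha' beta')
       (fun p => g 0 eta p || g (PI - eta) PI p) N ltac:(intros p Hp; apply Bool.orb_true_iff in Hp; exact Hp)).
    assert (A2 := cnt_sub (fun p => g 0 eta p || g (PI - eta) PI p) (g 0 eta) (g (PI - eta) PI) N
       ltac:(intros p Hp; apply Bool.orb_true_iff in Hp; exact Hp)).
    lia. }
  assert (cL : forall N, (cnt (g (alpha + eta)%R (beta0 - eta)%R) N <= P0 + cnt fT N)%nat).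
  { intros N. eapply Nat.le_trans. apply (cnt_sub _ lt0 fT N imL).
    pose proof (cnt_lt P0 N). fold lt0 in H. lia. }
  assert (he16 : 0 < eps / 16) by lra.
  set (e16 := mkposreal (eps / 16) he16).
  assert (ha' : 0 <= alpha' <= alpha) by (split; [apply Rmax_l|apply Rmax_lub; lra]).
  assert (ha'' : alpha - eta <= alpha') by apply Rmax_r.
  assert (hb' : beta0 <= beta' <= PI) by (split; [apply Rmin_glb; lra|apply Rmin_l]).
  assert (hb'' : beta' <= beta0 + eta) by apply Rmin_r.
  destruct (hST' alpha' beta' ltac:(lra) ltac:(lra) ltac:(lra) e16) as [N1 H1].
  destruct (hST' 0 eta ltac:(lra) ltac:(lra) ltac:(lra) e16) as [N2 H2].
  destruct (hST' (PI - eta) PI ltac:(lra) ltac:(lra) ltac:(lra) e16) as [N3 H3].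
  destruct (hST' (alpha + eta) (beta0 - eta) ltac:(lra) ltac:(lra) ltac:(lra) e16) as [N4 H4].
  assert (hx : 0 <= 16 * INR P0 / eps).
  { apply Rmult_le_pos. pose proof (pos_INR P0). lra. left. apply Rinv_0_lt_compat. lra. }
  destruct (nfloor_ex _ hx) as [m0 [_ hm0]].
  destruct (prime_count_unbounded (S m0)) as [N5 H5].
  assert (F1 : RInt stf alpha' beta' <= F + 2 * eta).
  { pose proof (F_compare alpha' alpha beta0 beta' ltac:(lra) ltac:(lra) ltac:(lra)).
    apply Rabs_le_between in H. fold F in H. lra. }
  assert (F2 : RInt stf 0 eta <= eta).
  { pose proof (F_piece 0 eta ltac:(lra)). apply Rabs_le_between in H. lra. }
  assert (F3 : RInt stf (PI - eta) PI <= eta).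
  { pose proof (F_piece (PI - eta) PI ltac:(lra)). apply Rabs_le_between in H. lra. }
  assert (F0 : F - 2 * eta <= RInt stf (alpha + eta) (beta0 - eta)).
  { pose proof (F_compare alpha (alpha + eta) (beta0 - eta) beta0 ltac:(lra) ltac:(lra) ltac:(lra)).
    apply Rabs_le_between in H. fold F in H. lra. }
  exists (max N1 (max N2 (max N3 (max N4 N5)))).
  intros N HN.
  specialize (H1 N ltac:(lia)). specialize (H2 N ltac:(lia)). specialize (H3 N ltac:(lia)).
  specialize (H4 N ltac:(lia)).
  assert (H5' : (S m0 <= prime_count N)%nat).
  { eapply Nat.le_trans. exact H5. apply (cnt_mono is_prime_nat N5 N). lia. }
  rewrite !eg in H1, H2, H3, H4. rewrite eT.
  set (S := INR (prime_count N)) in *.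
  assert (hS : 16 * INR P0 / eps < S).
  { unfold S. apply le_INR in H5'. rewrite S_INR in H5'. lra. }
  assert (hS0 : 0 < S) by lra.
  assert (hP0S : INR P0 / S < eps / 16).
  { apply (Rmult_lt_reg_r S); auto. unfold Rdiv at 1. rewrite Rmult_assoc, Rinv_l, Rmult_1_r by lra.
    apply (Rmult_lt_reg_l (16 / eps)). apply Rdiv_lt_0_compat; lra.
    replace (16 / eps * INR P0) with (16 * INR P0 / eps) by (field; lra).
    replace (16 / eps * (eps / 16 * S)) with S by (field; lra). lra. }
  pose proof (cU N) as U. pose proof (cL N) as L.
  apply le_INR in U. apply le_INR in L. rewrite !plus_INR in U. rewrite !plus_INR in L.
  set (T := INR (cnt fT N)) in *.
  set (C1 := INR (cnt (g alpha' beta') N)) in *.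
  set (C2 := INR (cnt (g 0 eta) N)) in *.
  set (C3 := INR (cnt (g (PI - eta) PI) N)) in *.
  set (C0 := INR (cnt (g (alpha + eta) (beta0 - eta)) N)) in *.
  simpl (pos e16) in H1, H2, H3, H4.
  apply Rabs_lt_between in H1. apply Rabs_lt_between in H2. apply Rabs_lt_between in H3.
  apply Rabs_lt_between in H4.
  assert (eU : T / S <= INR P0 / S + (C1 / S + (C2 / S + C3 / S))).
  { replace (INR P0 / S + (C1 / S + (C2 / S + C3 / S))) with ((INR P0 + (C1 + (C2 + C3))) / S) by (field; lra).
    apply Rmult_le_compat_r; [left; apply Rinv_0_lt_compat; lra|lra]. }
  assert (eL : C0 / S <= INR P0 / S + T / S).
  { replace (INR P0 / S + T / S) with ((INR P0 + T) / S) by (field; lra).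
    apply Rmult_le_compat_r; [left; apply Rinv_0_lt_compat; lra|lra]. }
  apply Rabs_lt_between. split; lra.
Qed.
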